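(* Let $f^1$ be one of the Gaussian-type smearing functions $f^1_{\rm G}$, $f^1_{{\rm MP},N'}$ (for some $N'\in\mathbb N$) or $f^1_{\rm cs}$ (for some $a\in\mathbb R$). Then $f^1$ extends to an entire function, and there exist $C\ge0$ and $q\ge0$ such that for all $x,y\in\mathbb R$, $$|f^1(x+iy)|\le\begin{cases}C\big(1+(x^2+y^2)^q\big)e^{y^2-x^2}&\text{if }x\ge0,\\ C\big(1+(x^2+y^2)^q\big)\big(1+e^{y^2-x^2}\big)&\text{if }x<0.\end{cases}$$
   Context: $f^1_{\rm G}(x)=\frac12(1-\mathrm{erf}(x))=\frac1{\sqrt\pi}\int_x^\infty e^{-t^2}dt$. Hermite polynomials: $H_0=1$, $H_{n+1}(x)=2xH_n(x)-H_n'(x)$. Methfessel–Paxton: $f^1_{{\rm MP},N'}(x)=f^1_{\rm G}(x)+\sum_{n=1}^{N'}A_nH_{2n-1}(x)e^{-x^2}$ with $A_n=\frac{(-1)^n}{n!4^n\sqrt\pi}$. Cold smearing: $f^1_{\rm cs}(x)=f^1_{\rm G}(x)+\frac1{4\sqrt\pi}(-aH_2(x)+H_1(x))e^{-x^2}$ with a parameter $a\in\mathbb R$. *)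

(* Defs.v *)
From Stdlib Require Import Reals Factorial.
From Coquelicot Require Import Coquelicot.
Open Scope R_scope.

(* erf x = 2/sqrt(pi) * int_0^x exp(-t^2) dt, so f_G(x) = (1 - erf x)/2
   = 1/sqrt(pi) * int_x^oo exp(-t^2) dt. *)
Definition erf (x : R) : R :=
  2 / sqrt PI * RInt (fun t => exp (- t ^ 2)) 0 x.

Definition f1_G (x : R) : R := / 2 * (1 - erf x).

Fixpoint hermite (n : nat) : R -> R :=
  match n with
  | O => fun _ => 1
  | S m => fun x => 2 * x * hermite m x - Derive (hermite m) x
  end.

Definition A_MP (n : nat) : R :=
  (-1) ^ n / (INR (Factorial.fact n) * 4 ^ n * sqrt PI).

Definition f1_MP (N' : nat) (x : R) : R :=
  f1_G x + sum_n_m (fun n => A_MP n * hermite (2 * n - 1) x * exp (- x ^ 2)) 1 N'.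

Definition f1_cs (a : R) (x : R) : R :=
  f1_G x + / (4 * sqrt PI) * (- a * hermite 2 x + hermite 1 x) * exp (- x ^ 2).

Inductive smearing : Type :=
  | SmG : smearing
  | SmMP : nat -> smearing
  | SmCS : R -> smearing.

Definition f1 (s : smearing) : R -> R :=
  match s with
  | SmG => f1_G
  | SmMP N' => f1_MP N'
  | SmCS a => f1_cs a
  end.

(* real power t^q for t >= 0, q >= 0, with 0^0 = 1 and 0^q = 0 for q > 0 *)
Definition rpow (t q : R) : R :=
  if Rle_dec t 0 then (if Req_EM_T q 0 then 1 else 0) else Rpower t q.

(* Main.v *)
Require Import Defs.
From Stdlib Require Import Reals Lra Lia List.
From Coquelicot Require Import Coquelicot.
Open Scope R_scope.


Lemma Cmod_le_sum (a b : R) : Cmod (a, b) <= Rabs a + Rabs b.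
Proof.
  unfold Cmod; simpl. apply Rsqr_incr_0_var.
  - rewrite Rsqr_sqrt by nra. unfold Rsqr.
    assert (Rabs a * Rabs a = a*a) by (rewrite <- Rabs_mult; apply Rabs_right; nra).
    assert (Rabs b * Rabs b = b*b) by (rewrite <- Rabs_mult; apply Rabs_right; nra).
    pose proof (Rabs_pos a); pose proof (Rabs_pos b). nra.
  - pose proof (Rabs_pos a); pose proof (Rabs_pos b). lra.
Qed.

Lemma Rabs_le_Cmod1 (a b : R) : Rabs a <= Cmod (a, b).
Proof. pose proof (Rmax_Cmod (a,b)). simpl in H. pose proof (Rmax_l (Rabs a) (Rabs b)). lra. Qed.
Lemma Rabs_le_Cmod2 (a b : R) : Rabs b <= Cmod (a, b).
Proof. pose proof (Rmax_Cmod (a,b)). simpl in H. pose proof (Rmax_r (Rabs a) (Rabs b)). lra. Qed.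

Lemma mvt_near (f df : R -> R) (x x' : R) :
  (forall t, is_derive f t (df t)) ->
  exists c, Rabs (c - x) <= Rabs (x' - x) /\ f x' - f x = df c * (x' - x).
Proof.
  intros H. destruct (MVT_gen f x x' df) as [c [Hc He]].
  - intros; apply H.
  - intros t _. apply continuity_pt_filterlim. apply (ex_derive_continuous (K:=R_AbsRing) (V:=R_NormedModule)). eexists; apply H.
  - exists c; split; [|exact He].
    unfold Rmin, Rmax in Hc; destruct (Rle_dec x x'); unfold Rabs;
    repeat destruct Rcase_abs; lra.
Qed.

Lemma CR (u v gr gi : R -> R -> R) :
 (forall x y, is_derive (fun t => u t y) x (gr x y)) ->
 (forall x y, is_derive (fun t => v t y) x (gi x y)) ->
 (forall x y, is_derive (fun t => u x t) y (- gi x y)) ->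
 (forall x y, is_derive (fun t => v x t) y (gr x y)) ->
 (forall x y, continuity_2d_pt gr x y) -> (forall x y, continuity_2d_pt gi x y) ->
 forall z : C, is_derive (K:=C_AbsRing) (V:=C_NormedModule)
   (fun w : C => (u (fst w) (snd w), v (fst w) (snd w)) : C) z
   (gr (fst z) (snd z), gi (fst z) (snd z)).
Proof.
  intros Hux Hvx Huy Hvy Cr Ci z.
  split; [apply is_linear_scal_l|].
  intros z' Hz'. apply (is_filter_lim_locally_unique (K:=C_AbsRing) (V:=AbsRing_NormedModule C_AbsRing)) in Hz'. subst z'.
  intros eps. destruct z as [x y]. simpl.
  assert (He4 : 0 < eps / 4) by (destruct eps; simpl; lra).
  destruct (Cr x y (mkposreal _ He4)) as [d1 Hd1].
  destruct (Ci x y (mkposreal _ He4)) as [d2 Hd2].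
  assert (Hd : 0 < Rmin d1 d2) by (apply Rmin_pos; apply cond_pos).
  exists (mkposreal _ Hd). intros w; change (R*R)%type in w; destruct w as [x' y']; intros Hb.
  unfold ball in Hb; simpl in Hb; unfold AbsRing_ball, abs, minus, plus, opp in Hb; simpl in Hb; unfold Cplus, Copp in Hb; simpl in Hb.
  pose proof (Rabs_le_Cmod1 (x' + - x) (y' + - y)) as Hb1.
  pose proof (Rabs_le_Cmod2 (x' + - x) (y' + - y)) as Hb2.
  simpl in Hd1, Hd2.
  unfold norm, minus, scal, plus, opp; simpl. unfold Cmult, Cplus, Copp; simpl.
  pose proof (Rmin_l d1 d2); pose proof (Rmin_r d1 d2).
  destruct (mvt_near (fun t => u t y') (fun t => gr t y') x x' (fun t => Hux t y')) as [c1 [Hc1 E1]].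
  destruct (mvt_near (fun t => u x t) (fun t => - gi x t) y y' (fun t => Huy x t)) as [c2 [Hc2 E2]].
  destruct (mvt_near (fun t => v t y') (fun t => gi t y') x x' (fun t => Hvx t y')) as [c3 [Hc3 E3]].
  destruct (mvt_near (fun t => v x t) (fun t => gr x t) y y' (fun t => Hvy x t)) as [c4 [Hc4 E4]].
  simpl in E1, E2, E3, E4.
unfold Rminus in Hc1, Hc2, Hc3, Hc4.   assert (A1 : Rabs (gr c1 y' - gr x y) < eps/4) by (apply Hd1; unfold Rminus; lra).
  assert (A2 : Rabs (gi x c2 - gi x y) < eps/4) by (apply Hd2; rewrite ?Rminus_diag, ?Rabs_R0; try apply cond_pos; unfold Rminus; lra).
  assert (A3 : Rabs (gi c3 y' - gi x y) < eps/4) by (apply Hd2; unfold Rminus; lra).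
  assert (A4 : Rabs (gr x c4 - gr x y) < eps/4) by (apply Hd1; rewrite ?Rminus_diag, ?Rabs_R0; try apply cond_pos; unfold Rminus; lra).
  set (a := x' + - x) in *. set (b := y' + - y) in *.
  assert (R1 : u x' y' + - u x y + - (a * gr x y - b * gi x y)
     = (gr c1 y' - gr x y) * a - (gi x c2 - gi x y) * b).
  { unfold a, b. replace (u x' y' + - u x y) with ((u x' y' - u x y') + (u x y' - u x y)) by ring.
    rewrite E1, E2. ring. }
  assert (R2 : v x' y' + - v x y + - (a * gi x y + b * gr x y)
     = (gi c3 y' - gi x y) * a + (gr x c4 - gr x y) * b).
  { unfold a, b. replace (v x' y' + - v x y) with ((v x' y' - v x y') + (v x y' - v x y)) by ring.
    rewrite E3, E4. ring. }
  rewrite R1, R2.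
  eapply Rle_trans; [apply Cmod_le_sum|].
  pose proof (Rabs_le_Cmod1 a b) as Ka. pose proof (Rabs_le_Cmod2 a b) as Kb.
  assert (Km : forall p q, Rabs p < eps/4 -> Rabs (p * q) <= eps/4 * Rabs q).
  { intros p q Hp. rewrite Rabs_mult. apply Rmult_le_compat_r; [apply Rabs_pos|lra]. }
  pose proof (Rabs_triang ((gr c1 y' - gr x y) * a) (- ((gi x c2 - gi x y) * b))) as T1.
  rewrite Rabs_Ropp in T1.
  pose proof (Rabs_triang ((gi c3 y' - gi x y) * a) ((gr x c4 - gr x y) * b)) as T2.
  pose proof (Km _ a A1). pose proof (Km _ b A2). pose proof (Km _ a A3). pose proof (Km _ b A4).
  unfold abs; simpl. fold a b.
  replace ((gr c1 y' - gr x y) * a - (gi x c2 - gi x y) * b) with ((gr c1 y' - gr x y) * a + - ((gi x c2 - gi x y) * b)) by ring.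
  pose proof (Rmult_le_compat_l eps _ _ (Rlt_le _ _ (cond_pos eps)) Ka).
  pose proof (Rmult_le_compat_l eps _ _ (Rlt_le _ _ (cond_pos eps)) Kb).
  lra.
Qed.

Lemma c2_comp (f : R -> R) (g : R -> R -> R) x y :
  (forall t, derivable_pt f t) -> continuity_2d_pt g x y -> continuity_2d_pt (fun u v => f (g u v)) x y.
Proof. intros Hf Hg. apply continuity_1d_2d_pt_comp; [apply derivable_continuous_pt, Hf | exact Hg]. Qed.
Lemma c2_exp g x y : continuity_2d_pt g x y -> continuity_2d_pt (fun u v => exp (g u v)) x y.
Proof. apply c2_comp. apply derivable_pt_exp. Qed.
Lemma c2_sin g x y : continuity_2d_pt g x y -> continuity_2d_pt (fun u v => sin (g u v)) x y.
Proof. apply c2_comp. apply derivable_pt_sin. Qed.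
Lemma c2_cos g x y : continuity_2d_pt g x y -> continuity_2d_pt (fun u v => cos (g u v)) x y.
Proof. apply c2_comp. apply derivable_pt_cos. Qed.
Lemma c2_pow g n x y : continuity_2d_pt g x y -> continuity_2d_pt (fun u v => (g u v) ^ n) x y.
Proof. apply (c2_comp (fun t => t ^ n)). intros; apply derivable_pt_pow. Qed.

Ltac c2d := repeat (first [apply c2_exp | apply c2_sin | apply c2_cos | apply c2_pow
  | apply continuity_2d_pt_mult | apply continuity_2d_pt_plus | apply continuity_2d_pt_minus
  | apply continuity_2d_pt_opp | apply continuity_2d_pt_const | apply continuity_2d_pt_id1
  | apply continuity_2d_pt_id2 ]).

Ltac unify_atoms f := repeat match goal with |- context [f ?a] => match goal with |- context [f ?b] =>
   assert_fails (constr_eq a b); replace (f a) with (f b) by (f_equal; ring) end end.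
Ltac dsolve := unify_atoms exp; unify_atoms sin; unify_atoms cos; ring.

Definition Eu x y := exp (y^2 - x^2) * cos (2*x*y).
Definition Ev x y := - (exp (y^2 - x^2) * sin (2*x*y)).
Definition EC (z : C) : C := (Eu (fst z) (snd z), Ev (fst z) (snd z)).

Lemma EC_derive (z : C) : ex_derive (K:=C_AbsRing) (V:=C_NormedModule) EC z.
Proof.
  eexists. apply (CR Eu Ev (fun x y => -2*(x*Eu x y - y*Ev x y)) (fun x y => -2*(x*Ev x y + y*Eu x y))).
  - intros x y. unfold Eu, Ev. auto_derive; [trivial| dsolve].
  - intros x y. unfold Eu, Ev. auto_derive; [trivial| dsolve].
  - intros x y. unfold Eu, Ev. auto_derive; [trivial| dsolve].
  - intros x y. unfold Eu, Ev. auto_derive; [trivial| dsolve].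
  - intros x y. unfold Eu, Ev. c2d.
  - intros x y. unfold Eu, Ev. c2d.
Qed.

Fixpoint peval (l : list R) (x : R) : R :=
  match l with nil => 0 | a :: l' => a + x * peval l' x end.
Fixpoint pevalC (l : list R) (z : C) : C :=
  match l with nil => RtoC 0 | a :: l' => Cplus (RtoC a) (Cmult z (pevalC l' z)) end.
Fixpoint padd (l1 l2 : list R) : list R :=
  match l1, l2 with nil, _ => l2 | _, nil => l1 | a::l1', b::l2' => (a+b) :: padd l1' l2' end.
Definition pscal c (l : list R) := map (Rmult c) l.
Fixpoint pder (l : list R) : list R :=
  match l with nil => nil | a :: l' => padd l' (0 :: pder l') end.

Lemma peval_padd l1 l2 x : peval (padd l1 l2) x = peval l1 x + peval l2 x.
Proof.
  revert l2; induction l1 as [|a l1 IH]; intros [|b l2]; simpl; try ring.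
  rewrite IH; ring.
Qed.
Lemma peval_pscal c l x : peval (pscal c l) x = c * peval l x.
Proof. induction l as [|a l IH]; simpl; [ring|]. rewrite IH; ring. Qed.

Lemma isd_pm a p dp x : is_derive p x dp -> is_derive (fun t => a + t * p t) x (p x + x * dp).
Proof.
  intros H. auto_derive.
  - eexists; exact H.
  - change (Derive (fun x0 : R => p x0) x) with (Derive p x). rewrite (is_derive_unique _ _ _ H). ring.
Qed.

Lemma pder_correct l x : is_derive (peval l) x (peval (pder l) x).
Proof.
  revert x; induction l as [|a l IH]; intros x; simpl.
  - auto_derive; auto.
  - rewrite peval_padd. simpl.
    replace (peval l x + (0 + x * peval (pder l) x)) with (peval l x + x * peval (pder l) x) by ring.
    apply isd_pm. apply IH.
Qed.

Lemma exd_c1 (F : C -> C) z : ex_derive (K:=C_AbsRing) (V:=AbsRing_NormedModule C_AbsRing) F z -> ex_derive (K:=C_AbsRing) (V:= C_NormedModule) F z.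
Proof.
intros [l H]. exists l. destruct H as [H1 H2]. split.
- destruct H1 as [A B C]. split; [exact A|exact B|].
  destruct C as [M [HM HM2]]. exists M. split; auto.
- intros x Hx. specialize (H2 x Hx). exact H2.
Qed.
Lemma exd_c2 (F : C -> C) z : ex_derive (K:=C_AbsRing) (V:= C_NormedModule) F z -> ex_derive (K:=C_AbsRing) (V:=AbsRing_NormedModule C_AbsRing) F z.
Proof.
intros [l H]. exists l. destruct H as [H1 H2]. split.
- destruct H1 as [A B C]. split; [exact A|exact B|].
  destruct C as [M [HM HM2]]. exists M. split; auto.
- intros x Hx. specialize (H2 x Hx). exact H2.
Qed.

Lemma ex_derive_multC (f g : C -> C) z :
  ex_derive (K:=C_AbsRing) (V:=C_NormedModule) f z ->
  ex_derive (K:=C_AbsRing) (V:=C_NormedModule) g z ->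
  ex_derive (K:=C_AbsRing) (V:=C_NormedModule) (fun w => Cmult (f w) (g w)) z.
Proof.
  intros Hf Hg. apply exd_c2 in Hf. apply exd_c2 in Hg. apply exd_c1.
  destruct Hf as [df Hf]; destruct Hg as [dg Hg]. eexists.
  apply (is_derive_mult (K:=C_AbsRing) f g z df dg Hf Hg). intros; apply Cmult_comm.
Qed.
Lemma ex_derive_plusC (f g : C -> C) z :
  ex_derive (K:=C_AbsRing) (V:=C_NormedModule) f z ->
  ex_derive (K:=C_AbsRing) (V:=C_NormedModule) g z ->
  ex_derive (K:=C_AbsRing) (V:=C_NormedModule) (fun w => Cplus (f w) (g w)) z.
Proof. intros Hf Hg. apply (ex_derive_plus (K:=C_AbsRing) (V:=C_NormedModule) f g); auto. Qed.

Lemma pevalC_derive l z : ex_derive (K:=C_AbsRing) (V:=C_NormedModule) (pevalC l) z.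
Proof.
  induction l as [|a l IH]; simpl.
  - apply (ex_derive_const (K:=C_AbsRing) (V:=C_NormedModule)).
  - apply (ex_derive_plusC (fun _ => RtoC a) (fun w => Cmult w (pevalC l w))).
    + apply (ex_derive_const (K:=C_AbsRing) (V:=C_NormedModule)).
    + apply (ex_derive_multC (fun w => w) (pevalC l)); auto.
      apply exd_c1, (ex_derive_id (K:=C_AbsRing)).
Qed.

Lemma pevalC_real l x : pevalC l (RtoC x) = RtoC (peval l x).
Proof.
  induction l as [|a l IH]; simpl; [reflexivity|].
  rewrite IH. rewrite <- RtoC_mult, <- RtoC_plus. reflexivity.
Qed.

Fixpoint psum (l : list R) : R := match l with nil => 0 | a :: l' => Rabs a + psum l' end.
Lemma psum_ge0 l : 0 <= psum l.
Proof. induction l; simpl; [lra|]. pose proof (Rabs_pos a); lra. Qed.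

Lemma pevalC_bound l z : Cmod (pevalC l z) <= psum l * (1 + Cmod z) ^ (length l).
Proof.
  induction l as [|a l IH]; simpl.
  - rewrite Cmod_0. lra.
  - eapply Rle_trans; [apply Cmod_triangle|]. rewrite Cmod_mult, Cmod_R.
    pose proof (Cmod_ge_0 z). pose proof (psum_ge0 l). pose proof (Rabs_pos a).
    assert (1 <= (1 + Cmod z) ^ length l) by (apply pow_R1_Rle; lra).
    assert (Cmod z * Cmod (pevalC l z) <= Cmod z * (psum l * (1 + Cmod z) ^ length l))
      by (apply Rmult_le_compat_l; lra).
    assert (0 <= psum l * (1 + Cmod z) ^ length l) by (apply Rmult_le_pos; lra).
    set (P := (1 + Cmod z) ^ length l) in *. assert (1 <= (1 + Cmod z) * P) by nra. assert (Rabs a * 1 <= Rabs a * ((1 + Cmod z) * P)) by (apply Rmult_le_compat_l; lra). nra.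
Qed.

Fixpoint hl (n : nat) : list R :=
  match n with O => 1 :: nil | S m => padd (pscal 2 (0 :: hl m)) (pscal (-1) (pder (hl m))) end.

Lemma hermite_hl n x : hermite n x = peval (hl n) x.
Proof.
  revert x; induction n as [|m IH]; intros x.
  - simpl; ring.
  - change (peval (hl (S m)) x) with (peval (padd (pscal 2 (0 :: hl m)) (pscal (-1) (pder (hl m)))) x).
    change (hermite (S m) x) with (2 * x * hermite m x - Derive (hermite m) x).
    rewrite peval_padd, !peval_pscal. simpl. rewrite IH.
    rewrite (Derive_ext (hermite m) (peval (hl m))) by exact IH.
    rewrite (is_derive_unique _ _ _ (pder_correct (hl m) x)). ring.
Qed.

Definition polyexp (g : R -> R) := exists l, forall x, g x = peval l x * exp (- x ^ 2).

Lemma polyexp_f1 s : exists l, forall x, f1 s x = f1_G x + peval l x * exp (- x ^ 2).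
Proof.
  destruct s as [|N0|a]; simpl.
  - exists nil. intros; simpl; ring.
  - assert (H : forall N, polyexp (fun x => sum_n_m (fun n => A_MP n * hermite (2 * n - 1) x * exp (- x ^ 2)) 1 N)).
    { induction N as [|N IH].
      - exists nil. intros x; rewrite sum_n_m_zero by lia. simpl. unfold zero; simpl; ring.
      - destruct N as [|N].
        + exists (pscal (A_MP 1) (hl 1)). intros x. rewrite sum_n_n, peval_pscal, <- hermite_hl. simpl. ring.
        + destruct IH as [l Hl]. exists (padd l (pscal (A_MP (S (S N))) (hl (2 * S (S N) - 1)))).
          intros x. rewrite sum_n_Sm by lia. rewrite Hl, peval_padd, peval_pscal, <- hermite_hl.
          unfold plus; simpl. ring. }
    destruct (H N0) as [l Hl]. exists l. intros x. unfold f1_MP. rewrite Hl. reflexivity.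
  - exists (pscal (/ (4 * sqrt PI)) (padd (pscal (-a) (hl 2)) (hl 1))).
    intros x. unfold f1_cs. rewrite peval_pscal, peval_padd, peval_pscal, <- !hermite_hl. reflexivity.
Qed.

Definition I (x : R) : R := RInt (fun t => exp (- t ^ 2)) 0 x.
Definition Jf (x t : R) := exp (- (x ^ 2) * (1 + t ^ 2)) / (1 + t ^ 2).
Definition J (x : R) : R := RInt (fun t => Jf x t) 0 1.

Lemma exp_le x y : x <= y -> exp x <= exp y.
Proof. intros [H|H]; [apply Rlt_le, exp_increasing, H| subst; lra]. Qed.

Ltac rring := match goal with |- ?a = ?b => change (@eq R a b) end; ring.

Lemma cont_of_derive (f : R -> R) x : ex_derive f x -> continuous f x.
Proof. apply (ex_derive_continuous (K:=R_AbsRing) (V:=R_NormedModule)). Qed.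

Lemma pos1t2 t : 0 < 1 + t ^ 2.
Proof. pose proof (pow2_ge_0 t). lra. Qed.

Lemma exRInt_gauss a b : ex_RInt (fun t => exp (- t ^ 2)) a b.
Proof. apply (ex_RInt_continuous (V:=R_CompleteNormedModule)). intros; apply cont_of_derive. auto_derive; auto. Qed.

Lemma I_derive (x : R) : is_derive I x (exp (- x ^ 2)).
Proof.
  apply (is_derive_RInt (fun t => exp (- t ^ 2)) I 0 x).
  - apply filter_forall. intros b. apply (RInt_correct (V:=R_CompleteNormedModule)), exRInt_gauss.
  - apply cont_of_derive. auto_derive; auto.
Qed.

Lemma Jf_D u t : Derive (fun z => Jf z t) u = -2 * u * exp (- (u ^ 2) * (1 + t ^ 2)).
Proof.
  apply is_derive_unique. unfold Jf. pose proof (pos1t2 t). auto_derive.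
  - lra.
  - unify_atoms exp. field. nra.
Qed.

Lemma lin_gauss x : RInt (fun t => x * exp (- (x*t)^2)) 0 1 = I x.
Proof.
  pose proof (RInt_comp_lin (V:=R_CompleteNormedModule) (fun s => exp (- s^2)) x 0 0 1 (exRInt_gauss _ _)) as H.
  replace (x*0+0) with 0 in H by ring. replace (x*1+0) with x in H by ring.
  unfold I. etransitivity; [|exact H]. apply RInt_ext. intros t _. unfold scal; simpl; unfold mult; simpl.
  f_equal. f_equal. ring.
Qed.

Lemma J_derive (x : R) : is_derive J x (-2 * exp (- x ^ 2) * I x).
Proof.
  unfold J.
  replace (-2 * exp (- x ^ 2) * I x) with (RInt (fun t => Derive (fun u => Jf u t) x) 0 1).
  - apply (is_derive_RInt_param Jf 0 1 x).
    + apply filter_forall. intros x0 t _. unfold Jf. pose proof (pos1t2 t). auto_derive. lra.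
    + intros t _. apply (continuity_2d_pt_ext (fun u t => -2 * u * exp (- (u ^ 2) * (1 + t ^ 2)))).
      * intros; rewrite Jf_D; reflexivity.
      * c2d.
    + apply filter_forall. intros y. apply (ex_RInt_continuous (V:=R_CompleteNormedModule)). intros z _. apply cont_of_derive.
      unfold Jf. pose proof (pos1t2 z). auto_derive. lra.
  - rewrite (RInt_ext _ (fun t => (-2 * exp (- x ^ 2)) * (x * exp (- (x * t) ^ 2)))).
    2:{ intros t _. rewrite Jf_D.
        replace (- (x * t) ^ 2) with (- x ^ 2 * t ^ 2) by ring.
        replace (- x ^ 2 * (1 + t ^ 2)) with (- x ^ 2 + - x ^ 2 * t ^ 2) by ring.
        rewrite exp_plus. match goal with |- ?a = ?b => change (@eq R a b) end; ring. }
    pose proof (RInt_scal (V:=R_CompleteNormedModule) (fun t => x * exp (- (x * t) ^ 2)) 0 1 (-2 * exp (- x ^ 2))) as H.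
    unfold scal in H; simpl in H; unfold mult in H; simpl in H.
    etransitivity; [etransitivity; [|apply H]|].
    + apply RInt_ext. intros; reflexivity.
    + apply (ex_RInt_continuous (V:=R_CompleteNormedModule)). intros; apply cont_of_derive. auto_derive; auto.
    + rewrite <- lin_gauss. reflexivity.
Qed.

Lemma J0 : J 0 = PI / 4.
Proof.
  unfold J. rewrite (RInt_ext _ (fun t => / (1 + t ^ 2))).
  2:{ intros t _. unfold Jf. replace (- 0 ^ 2 * (1 + t ^ 2)) with 0 by ring. rewrite exp_0. unfold Rdiv. rring. }
  rewrite (is_RInt_unique _ 0 1 (minus (atan 1) (atan 0))).
  - rewrite atan_1, atan_0. unfold minus, plus, opp; simpl. ring.
  - apply (is_RInt_derive atan).
    + intros t _. apply is_derive_Reals. apply derivable_pt_lim_atan.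
    + intros t _. apply cont_of_derive. pose proof (pos1t2 t). auto_derive. lra.
Qed.

Lemma hderiv (t : R) : is_derive (fun x => I x ^ 2 + J x) t 0.
Proof.
  pose proof (I_derive t) as HI. pose proof (J_derive t) as HJ.
  auto_derive.
  - split; [eexists; exact HI | split; [eexists; exact HJ| trivial]].
  - change (Derive (fun x0 : R => I x0) t) with (Derive I t).
    change (Derive (fun x0 : R => J x0) t) with (Derive J t).
    rewrite (is_derive_unique _ _ _ HI), (is_derive_unique _ _ _ HJ). ring.
Qed.

Lemma hconst x : I x ^ 2 + J x = PI / 4.
Proof.
  destruct (MVT_gen (fun x => I x ^ 2 + J x) 0 x (fun _ => 0)) as [c [_ Hc]].
  - intros t _. apply hderiv.
  - intros t _. apply continuity_pt_filterlim. apply (cont_of_derive (fun x => I x ^ 2 + J x)). eexists; apply hderiv.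
  - assert (I 0 = 0) by (unfold I; rewrite RInt_point; reflexivity).
    rewrite H, J0 in Hc. lra.
Qed.

Lemma J_bounds x : 0 <= J x <= exp (- x ^ 2).
Proof.
  assert (Hex : ex_RInt (fun t => Jf x t) 0 1).
  { apply (ex_RInt_continuous (V:=R_CompleteNormedModule)). intros z _. apply cont_of_derive. unfold Jf. pose proof (pos1t2 z). auto_derive. lra. }
  split.
  - apply RInt_ge_0; [lra|exact Hex|]. intros t _. unfold Jf. pose proof (pos1t2 t).
    apply Rdiv_le_0_compat; [apply Rlt_le, exp_pos | lra].
  - unfold J. eapply Rle_trans.
    + apply (RInt_le _ (fun _ => exp (- x ^ 2))); [lra| exact Hex | apply ex_RInt_const |].
      intros t _. unfold Jf. pose proof (pos1t2 t). pose proof (pow2_ge_0 t). pose proof (pow2_ge_0 x).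
      assert (exp (- x ^ 2 * (1 + t ^ 2)) <= exp (- x ^ 2)).
      { apply exp_le. nra. }
      assert (0 < / (1 + t^2) <= 1).
      { split; [apply Rinv_0_lt_compat; lra|]. rewrite <- Rinv_1. apply Rinv_le_contravar; lra. }
      pose proof (exp_pos (- x ^ 2 * (1 + t ^ 2))). unfold Rdiv. nra.
    + rewrite RInt_const. unfold scal; simpl; unfold mult; simpl. lra.
Qed.

Lemma sqrtPI_facts : 0 < sqrt PI /\ sqrt PI * sqrt PI = PI /\ 3 < PI.
Proof.
  pose proof PI_RGT_0. pose proof PI2_3_2.
  split; [apply sqrt_lt_R0; lra|]. split; [apply sqrt_sqrt; lra| lra].
Qed.

Lemma I_bound x : - (sqrt PI / 2) <= I x <= sqrt PI / 2.
Proof.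
  pose proof (hconst x). pose proof (J_bounds x). pose proof (exp_pos (- x^2)).
  destruct sqrtPI_facts as [Hs [Hss Hp]]. set (s := sqrt PI) in *.
  split; nra.
Qed.

Lemma fG_bound x : 0 <= f1_G x <= 1.
Proof.
  pose proof (I_bound x). destruct sqrtPI_facts as [Hs [Hss Hp]].
  unfold f1_G, erf. fold (I x). set (s := sqrt PI) in *.
  assert (2 / s * I x <= 1 /\ -1 <= 2 / s * I x).
  { unfold Rdiv. split.
    - apply Rmult_le_reg_l with s; [lra|]. replace (s * (2 * / s * I x)) with (2 * I x) by (field; lra). lra.
    - apply Rmult_le_reg_l with s; [lra|]. replace (s * (2 * / s * I x)) with (2 * I x) by (field; lra). lra. }
  lra.
Qed.

Lemma I_nonneg x : 0 <= x -> 0 <= I x.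
Proof.
  intros Hx. apply RInt_ge_0; [exact Hx| apply exRInt_gauss |]. intros; apply Rlt_le, exp_pos.
Qed.

Lemma fG_decay x : 0 <= x -> f1_G x <= exp (- x ^ 2).
Proof.
  intros Hx. pose proof (I_bound x). pose proof (I_nonneg x Hx). pose proof (hconst x). pose proof (J_bounds x).
  destruct sqrtPI_facts as [Hs [Hss Hp]].
  unfold f1_G, erf. fold (I x). set (s := sqrt PI) in *. set (i := I x) in *.
  replace (/ 2 * (1 - 2 / s * i)) with ((s/2 - i) / s) by (field; lra).
  set (d := s / 2 - i).
  assert (Hd : d * (s / 2 + i) = J x) by (unfold d; nra).
  assert (Hd0 : 0 <= d) by (unfold d; lra).
  assert (d * (s/2) <= J x) by nra.
  assert (d <= 2 * J x / s).
  { apply Rmult_le_reg_l with (s/2); [lra|]. replace (s / 2 * (2 * J x / s)) with (J x) by (field; lra). lra. }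
  apply Rle_trans with (2 * J x / s / s).
  - unfold Rdiv at 1. unfold Rdiv at 2. apply Rmult_le_compat_r; [apply Rlt_le, Rinv_0_lt_compat; lra| exact H4].
  - replace (2 * J x / s / s) with (2 * J x / PI) by (rewrite <- Hss; field; lra).
    apply Rle_trans with (J x); [|lra].
    unfold Rdiv. apply Rmult_le_reg_l with PI; [lra|].
    replace (PI * (2 * J x * / PI)) with (2 * J x) by (field; lra). nra.
Qed.

Definition Pf (x u : R) : R := exp (u ^ 2 - x ^ 2) * sin (2 * x * u).
Definition Qf (x u : R) : R := exp (u ^ 2 - x ^ 2) * cos (2 * x * u).
Definition P (x y : R) : R := RInt (fun u => Pf x u) 0 y.
Definition Q (x y : R) : R := RInt (fun u => Qf x u) 0 y.

Lemma Dun (f : R -> R) (x l : R) : is_derive f x l -> Derive f x = l.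
Proof. apply is_derive_unique. Qed.

Lemma param_deriv (f df g : R -> R -> R) (x y : R) :
  (forall z u, is_derive (fun z => f z u) z (df z u)) ->
  (forall z u, continuity_2d_pt df z u) ->
  (forall z u, ex_derive (f z) u) ->
  (forall u, is_derive (g x) u (df x u)) ->
  (forall u, ex_derive (df x) u) ->
  is_derive (fun t => RInt (fun u => f t u) 0 y) x (g x y - g x 0).
Proof.
  intros Hd Hc Hf Hg Hdf.
  replace (g x y - g x 0) with (RInt (fun u => Derive (fun z => f z u) x) 0 y).
  - apply (is_derive_RInt_param f 0 y x).
    + apply filter_forall. intros x0 t _. eexists; apply Hd.
    + intros t _. apply (continuity_2d_pt_ext df).
      * intros; symmetry; apply is_derive_unique, Hd.
      * apply Hc.
    + apply filter_forall. intros z. apply (ex_RInt_continuous (V:=R_CompleteNormedModule)).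
      intros u _. apply cont_of_derive, Hf.
  - rewrite (RInt_ext _ (df x)).
    2:{ intros; apply is_derive_unique, Hd. }
    apply is_RInt_unique. apply (is_RInt_derive (V:=R_CompleteNormedModule) (g x) (df x)).
    + intros; apply Hg.
    + intros; apply cont_of_derive, Hdf.
Qed.

Lemma ftc (f : R -> R) (y : R) : (forall u, ex_derive f u) -> is_derive (fun t => RInt f 0 t) y (f y).
Proof.
  intros Hf. apply (is_derive_RInt f (fun t => RInt f 0 t) 0 y).
  - apply filter_forall. intros b. apply (RInt_correct (V:=R_CompleteNormedModule)).
    apply (ex_RInt_continuous (V:=R_CompleteNormedModule)). intros; apply cont_of_derive, Hf.
  - apply cont_of_derive, Hf.
Qed.

Lemma P_dx (x y : R) : is_derive (fun t => P t y) x (Qf x y - exp (- x ^ 2)).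
Proof.
  replace (exp (- x ^ 2)) with (Qf x 0).
  2:{ unfold Qf. rewrite Rmult_0_r, cos_0, Rmult_1_r. f_equal. ring. }
  apply (param_deriv Pf (fun z u => exp (u ^ 2 - z ^ 2) * (-2 * z * sin (2 * z * u) + 2 * u * cos (2 * z * u))) Qf).
  - intros; unfold Pf; auto_derive; [trivial| dsolve].
  - intros; c2d.
  - intros; unfold Pf; auto_derive; trivial.
  - intros; unfold Qf; auto_derive; [trivial| dsolve].
  - intros; auto_derive; trivial.
Qed.

Lemma Q_dx (x y : R) : is_derive (fun t => Q t y) x (- Pf x y).
Proof.
  replace (- Pf x y) with ((fun x u => - Pf x u) x y - (fun x u => - Pf x u) x 0).
  2:{ unfold Pf. rewrite Rmult_0_r, sin_0. ring. }
  unfold Q. apply (param_deriv Qf (fun z u => exp (u ^ 2 - z ^ 2) * (-2 * z * cos (2 * z * u) - 2 * u * sin (2 * z * u))) (fun x u => - Pf x u)).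
  - intros; unfold Qf; auto_derive; [trivial| dsolve].
  - intros; c2d.
  - intros; unfold Qf; auto_derive; trivial.
  - intros; unfold Pf; auto_derive; [trivial| dsolve].
  - intros; auto_derive; trivial.
Qed.

Lemma f1G_derive (x : R) : is_derive f1_G x (- / sqrt PI * exp (- x ^ 2)).
Proof.
  destruct sqrtPI_facts as [Hs _].
  unfold f1_G, erf. change (RInt (fun t => exp (- t ^ 2)) 0) with I.
  pose proof (I_derive x) as HI. auto_derive.
  - eexists; exact HI.
  - change (Derive (fun x0 : R => I x0) x) with (Derive I x). rewrite (is_derive_unique _ _ _ HI).
    field. lra.
Qed.

Definition uG (x y : R) : R := f1_G x - / sqrt PI * P x y.
Definition vG (x y : R) : R := - (/ sqrt PI * Q x y).
Definition FG (z : C) : C := (uG (fst z) (snd z), vG (fst z) (snd z)).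

Lemma isd_affine (a c : R) (g : R -> R) y dg : is_derive g y dg -> is_derive (fun t => a + c * g t) y (c * dg).
Proof.
  intros H. auto_derive.
  - eexists; exact H.
  - change (Derive (fun x : R => g x) y) with (Derive g y). rewrite (Dun g y dg H). ring.
Qed.

Lemma FG_derive (z : C) : ex_derive (K:=C_AbsRing) (V:=C_NormedModule) FG z.
Proof.
  eexists. apply (CR uG vG (fun x y => - / sqrt PI * Qf x y) (fun x y => / sqrt PI * Pf x y)).
  - intros x y. unfold uG. pose proof (f1G_derive x) as H1. pose proof (P_dx x y) as H2.
    auto_derive.
    + split; [eexists; exact H1| split; [eexists; exact H2| trivial]].
    + change (Derive (fun x0 : R => f1_G x0) x) with (Derive f1_G x).
      rewrite (Dun _ _ _ H1), (Dun (fun t : R => P t y) _ _ H2). ring.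
  - intros x y. unfold vG. pose proof (Q_dx x y) as H2.
    auto_derive.
    + eexists; exact H2.
    + rewrite (Dun (fun t : R => Q t y) _ _ H2). ring.
  - intros x y. apply (is_derive_ext (fun t => f1_G x + (- / sqrt PI) * P x t)).
    { intros; unfold uG; rring. }
    replace (- (/ sqrt PI * Pf x y)) with (- / sqrt PI * Pf x y) by ring.
    apply isd_affine. apply (ftc (Pf x) y). intros u; unfold Pf; auto_derive; trivial.
  - intros x y. apply (is_derive_ext (fun t => 0 + (- / sqrt PI) * Q x t)).
    { intros; unfold vG; rring. }
    apply isd_affine. apply (ftc (Qf x) y). intros u; unfold Qf; auto_derive; trivial.
  - intros; unfold Qf; c2d.
  - intros; unfold Pf; c2d.
Qed.

Lemma FG_real (x : R) : FG (RtoC x) = RtoC (f1_G x).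
Proof.
  unfold FG, RtoC, uG, vG, P, Q; simpl. rewrite !RInt_point. unfold zero; simpl.
  f_equal; ring.
Qed.

Lemma RInt_bound (f : R -> R) (y M : R) :
  (forall u, ex_derive f u) -> (forall u, Rabs u <= Rabs y -> Rabs (f u) <= M) ->
  Rabs (RInt f 0 y) <= Rabs y * M.
Proof.
  intros Hf HM.
  assert (Hex : forall a b, ex_RInt f a b).
  { intros. apply (ex_RInt_continuous (V:=R_CompleteNormedModule)). intros; apply cont_of_derive, Hf. }
  destruct (Rle_dec 0 y) as [Hy|Hy].
  - rewrite (Rabs_right y) by lra. replace y with (y - 0) at 2 by ring.
    apply abs_RInt_le_const; auto. intros t Ht. apply HM.
    rewrite (Rabs_right t), (Rabs_right y); lra.
  - rewrite (Rabs_left y) by lra.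
    rewrite <- (opp_RInt_swap (V:=R_CompleteNormedModule)) by auto.
    change (Rabs (- RInt f y 0) <= - y * M). rewrite Rabs_Ropp. replace (- y) with (0 - y) by ring.
    apply abs_RInt_le_const; auto; try lra. intros t Ht. apply HM.
    rewrite (Rabs_left1 t), (Rabs_left y); lra.
Qed.

Lemma expsq_le x u y : Rabs u <= Rabs y -> exp (u ^ 2 - x ^ 2) <= exp (y ^ 2 - x ^ 2).
Proof.
  intros H. apply exp_le. pose proof (Rabs_pos u).
  rewrite <- (pow2_abs u), <- (pow2_abs y). nra.
Qed.

Lemma PQ_bound x y : Rabs (P x y) <= Rabs y * exp (y ^ 2 - x ^ 2) /\ Rabs (Q x y) <= Rabs y * exp (y ^ 2 - x ^ 2).
Proof.
  split; apply RInt_bound.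
  - intros; unfold Pf; auto_derive; trivial.
  - intros u Hu. unfold Pf. rewrite Rabs_mult, (Rabs_right (exp _)) by (apply Rle_ge, Rlt_le, exp_pos).
    pose proof (SIN_bound (2 * x * u)). pose proof (exp_pos (u ^ 2 - x ^ 2)). pose proof (expsq_le x u y Hu).
    assert (Rabs (sin (2 * x * u)) <= 1) by (apply Rabs_le; lra). nra.
  - intros; unfold Qf; auto_derive; trivial.
  - intros u Hu. unfold Qf. rewrite Rabs_mult, (Rabs_right (exp _)) by (apply Rle_ge, Rlt_le, exp_pos).
    pose proof (COS_bound (2 * x * u)). pose proof (exp_pos (u ^ 2 - x ^ 2)). pose proof (expsq_le x u y Hu).
    assert (Rabs (cos (2 * x * u)) <= 1) by (apply Rabs_le; lra). nra.
Qed.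

Lemma FG_bound x y :
  Cmod (FG (x, y)) <= (if Rle_dec 0 x then (1 + 2 * Rabs y) * exp (y ^ 2 - x ^ 2)
                       else (1 + 2 * Rabs y) * (1 + exp (y ^ 2 - x ^ 2))).
Proof.
  unfold FG; cbn [fst snd]. eapply Rle_trans; [apply Cmod_le_sum|].
  destruct (PQ_bound x y) as [HP HQ]. destruct sqrtPI_facts as [Hs [Hss Hp]].
  assert (Hi : 0 < / sqrt PI <= 1).
  { split; [apply Rinv_0_lt_compat; lra|]. rewrite <- Rinv_1. apply Rinv_le_contravar; nra. }
  assert (HuG : Rabs (uG x y) <= Rabs (f1_G x) + Rabs (P x y)).
  { unfold uG. eapply Rle_trans; [apply Rabs_triang|]. rewrite Rabs_Ropp, Rabs_mult, (Rabs_right (/ sqrt PI)) by lra.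
    pose proof (Rabs_pos (P x y)). nra. }
  assert (HvG : Rabs (vG x y) <= Rabs (Q x y)).
  { unfold vG. rewrite Rabs_Ropp, Rabs_mult, (Rabs_right (/ sqrt PI)) by lra.
    pose proof (Rabs_pos (Q x y)). nra. }
  pose proof (fG_bound x). pose proof (exp_pos (y ^ 2 - x ^ 2)). pose proof (Rabs_pos y).
  rewrite (Rabs_right (f1_G x)) in HuG by lra.
  destruct (Rle_dec 0 x) as [Hx|Hx].
  - pose proof (fG_decay x Hx).
    assert (exp (- x ^ 2) <= exp (y ^ 2 - x ^ 2)) by (apply exp_le; pose proof (pow2_ge_0 y); lra).
    nra.
  - nra.
Qed.

Lemma EC_real x : EC (RtoC x) = RtoC (exp (- x ^ 2)).
Proof.
  unfold EC, Eu, Ev, RtoC; cbn [fst snd]. rewrite Rmult_0_r, cos_0, sin_0.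
  f_equal; [rewrite Rmult_1_r; f_equal; ring | ring].
Qed.

Lemma EC_mod x y : Cmod (EC (x, y)) = exp (y ^ 2 - x ^ 2).
Proof.
  unfold EC, Eu, Ev, Cmod; cbn [fst snd].
  replace ((exp (y ^ 2 - x ^ 2) * cos (2 * x * y)) ^ 2 + (- (exp (y ^ 2 - x ^ 2) * sin (2 * x * y))) ^ 2)
    with (exp (y ^ 2 - x ^ 2) ^ 2 * (sin (2 * x * y) ^ 2 + cos (2 * x * y) ^ 2)) by ring.
  rewrite <- !Rsqr_pow2, sin2_cos2, Rmult_1_r. apply sqrt_Rsqr. apply Rlt_le, exp_pos.
Qed.

Lemma pow_bound r M : 0 <= r -> (1 + r) ^ M <= 2 ^ M * (1 + (r ^ 2) ^ M).
Proof.
  intros Hr. pose proof (pow_le 2 M ltac:(lra)) as H2.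
  assert (Hrm : r ^ M <= 1 + (r ^ 2) ^ M).
  { pose proof (pow_le (r^2) M ltac:(nra)).
    destruct (Rle_dec r 1).
    - pose proof (pow_incr r 1 M ltac:(lra)). rewrite pow1 in H0. lra.
    - pose proof (pow_incr r (r ^ 2) M ltac:(nra)). lra. }
  destruct (Rle_dec r 1).
  - pose proof (pow_incr (1 + r) 2 M ltac:(lra)). pose proof (pow_le (r^2) M ltac:(nra)). nra.
  - pose proof (pow_incr (1 + r) (2 * r) M ltac:(lra)). rewrite Rpow_mult_distr in H. nra.
Qed.

Lemma rpow_ge t M : 0 <= t -> (1 <= M)%nat -> t ^ M <= rpow t (INR M).
Proof.
  intros Ht HM. unfold rpow. destruct (Rle_dec t 0).
  - assert (t = 0) by lra. subst. rewrite pow_i by lia.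
    destruct (Req_EM_T (INR M) 0); lra.
  - rewrite Rpower_pow by lra. lra.
Qed.

Theorem lemmaA7 (s : smearing) :
  exists F : C -> C,
    (forall z : C, ex_derive F z) /\
    (forall x : R, F (RtoC x) = RtoC (f1 s x)) /\
    exists c q : R, 0 <= c /\ 0 <= q /\
      forall x y : R,
        Cmod (F (x, y)) <=
          (if Rle_dec 0 x
           then c * (1 + rpow (x ^ 2 + y ^ 2) q) * exp (y ^ 2 - x ^ 2)
           else c * (1 + rpow (x ^ 2 + y ^ 2) q) * (1 + exp (y ^ 2 - x ^ 2))).
Proof.
  destruct (polyexp_f1 s) as [L HL].
  exists (fun z => Cplus (FG z) (Cmult (pevalC L z) (EC z))).
  split; [|split].
  - intros z. apply ex_derive_plusC; [apply FG_derive|].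
    apply ex_derive_multC; [apply pevalC_derive | apply EC_derive].
  - intros x. rewrite FG_real, pevalC_real, EC_real, HL, <- RtoC_mult, <- RtoC_plus. reflexivity.
  - set (M := S (length L)). set (K := psum L).
    pose proof (psum_ge0 L) as HK. fold K in HK.
    exists ((2 + K) * 2 ^ (M + 1)), (INR M).
    split; [apply Rmult_le_pos; [lra| apply pow_le; lra]|].
    split; [apply pos_INR|].
    intros x y.
    set (r := Cmod (x, y)). set (e := exp (y ^ 2 - x ^ 2)).
    assert (Hr : 0 <= r) by apply Cmod_ge_0.
    assert (Hr2 : r ^ 2 = x ^ 2 + y ^ 2).
    { unfold r, Cmod; cbn [fst snd]. apply pow2_sqrt. nra. }
    assert (Hy : Rabs y <= r) by apply Rabs_le_Cmod2.
    assert (He : 0 < e) by apply exp_pos.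
    assert (Hp : Cmod (Cmult (pevalC L (x, y)) (EC (x, y))) <= K * (1 + r) ^ M * e).
    { rewrite Cmod_mult, EC_mod. fold e. pose proof (pevalC_bound L (x, y)). fold K r in H.
      pose proof (Cmod_ge_0 (pevalC L (x, y))).
      assert (K * (1 + r) ^ length L <= K * (1 + r) ^ M).
      { apply Rmult_le_compat_l; [lra|]. unfold M. simpl.
        pose proof (pow_le (1 + r) (length L) ltac:(lra)). nra. }
      nra. }
    assert (H1r : 1 <= (1 + r) ^ M) by (apply pow_R1_Rle; lra).
    assert (Hlin : 1 + 2 * Rabs y <= 2 * (1 + r) ^ M).
    { unfold M. simpl. pose proof (pow_R1_Rle (1 + r) (length L) ltac:(lra)). nra. }
    pose proof (pow_bound r M Hr) as PB. rewrite Hr2 in PB.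
    pose proof (rpow_ge (x ^ 2 + y ^ 2) M ltac:(nra) ltac:(unfold M; lia)) as RG.
    assert (HB : (2 + K) * (1 + r) ^ M <= (2 + K) * 2 ^ (M + 1) * (1 + rpow (x ^ 2 + y ^ 2) (INR M))).
    { rewrite pow_add. pose proof (pow_le 2 M ltac:(lra)).
      assert ((1 + r) ^ M <= 2 ^ M * 2 ^ 1 * (1 + rpow (x ^ 2 + y ^ 2) (INR M))).
      { pose proof (pow_le (x ^ 2 + y ^ 2) M ltac:(nra)). rewrite pow_1. set (t := x ^ 2 + y ^ 2) in *. set (rp := rpow t (INR M)) in *. pose proof (Rmult_le_compat_l (2 ^ M) _ _ H (Rplus_le_compat_l 1 _ _ RG)). nra. }
      rewrite Rmult_assoc. apply Rmult_le_compat_l; lra. }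
    pose proof (FG_bound x y) as HF.
    eapply Rle_trans; [apply Cmod_triangle|].
    destruct (Rle_dec 0 x) as [Hx|Hx]; fold e in HF |- *.
    + assert (Cmod (FG (x, y)) + Cmod (Cmult (pevalC L (x, y)) (EC (x, y))) <= (2 + K) * (1 + r) ^ M * e) by nra.
      eapply Rle_trans; [exact H|]. apply Rmult_le_compat_r; lra.
    + assert (Cmod (FG (x, y)) + Cmod (Cmult (pevalC L (x, y)) (EC (x, y))) <= (2 + K) * (1 + r) ^ M * (1 + e)) by nra.
      eapply Rle_trans; [exact H|]. apply Rmult_le_compat_r; lra.
Qed.
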